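(* Let $n$ be a positive integer. For any finite simple graph $H$, the strong product $K_n \boxtimes H$ is well-dominated if and only if $H$ is well-dominated.
   Context: A set $D$ of vertices of a graph is dominating if every vertex is in $D$ or adjacent to a vertex of $D$. A graph is well-dominated if every minimal (with respect to inclusion) dominating set is a minimum dominating set. The strong product $G\boxtimes H$ has vertex set $V(G)\times V(H)$, with distinct $(g_1,h_1)$ and $(g_2,h_2)$ adjacent iff ($g_1=g_2$ and $h_1h_2\in E(H)$), or ($h_1=h_2$ and $g_1g_2\in E(G)$), or ($g_1g_2\in E(G)$ and $h_1h_2\in E(H)$). *)

(* Defs.v *)
From mathcomp Require Import all_boot.
Set Implicit Arguments. Unset Strict Implicit. Unset Printing Implicit Defensive.

Definition simple_graph (T : finType) (e : rel T) : Prop :=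
  symmetric e /\ irreflexive e.

Definition dominating (T : finType) (e : rel T) (D : {set T}) : bool :=
  [forall v, (v \in D) || [exists u in D, e v u]].

Definition minimal_dominating (T : finType) (e : rel T) (D : {set T}) : bool :=
  minset (dominating e) D.

Definition minimum_dominating (T : finType) (e : rel T) (D : {set T}) : bool :=
  dominating e D && [forall D' : {set T}, dominating e D' ==> (#|D| <= #|D'|)].

Definition well_dominated (T : finType) (e : rel T) : Prop :=
  forall D : {set T}, minimal_dominating e D -> minimum_dominating e D.

Definition complete_rel (n : nat) : rel 'I_n := fun i j => i != j.

Definition strong_prod (G H : finType) (eG : rel G) (eH : rel H) : rel (G * H) :=
  fun x y =>
    (x != y) &&
    [&& (x.1 == y.1) || eG x.1 y.1 & (x.2 == y.2) || eH x.2 y.2].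

(* Main.v *)
Require Import Defs.
From mathcomp Require Import all_boot.

Set Implicit Arguments.
Section S.
Variables (n : nat) (H : finType) (eH : rel H).
Hypothesis n0 : 0 < n.
Let i0 : 'I_n := Ordinal n0.
Let eP := strong_prod (@complete_rel n) eH.

Lemma domP (T : finType) (e : rel T) (D : {set T}) :
  reflect (forall v, exists2 u, u \in D & (u == v) || e v u) (dominating e D).
Proof.
apply: (iffP forallP) => Hd v.
  case/orP: (Hd v) => [vD|/existsP[u /andP[uD evu]]].
    by exists v; rewrite ?eqxx.
  by exists u; rewrite ?evu ?orbT.
have [u uD /orP[/eqP<-|evu]] := Hd v; first by rewrite uD.
by apply/orP; right; apply/existsP; exists u; rewrite uD.
Qed.

Lemma dom_prod (D : {set 'I_n * H}) :
  dominating eP D = dominating eH (snd @: D).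
Proof.
apply/domP/domP.
  move=> Hd v; have [u uD hu] := Hd (i0, v).
  exists u.2; first by apply/imsetP; exists u.
  case/orP: hu => [/eqP->|]; first by rewrite eqxx.
  by case/andP=> _ /andP[_]; rewrite eq_sym.
move=> Hd [i v]; have [w /imsetP[u uD ->] hw] := Hd v.
exists u => //; case: (eqVneq u (i, v)) => [->|ne]; first by [].
rewrite /eP /strong_prod /= eq_sym ne /=; apply/andP; split.
  by rewrite /complete_rel; case: (i == u.1).
by rewrite eq_sym.
Qed.

Definition liftS (S : {set H}) : {set 'I_n * H} := [set (i0, h) | h in S].

Lemma liftSK S : snd @: liftS S = S.
Proof. by rewrite /liftS -imset_comp; apply/setP=> h; rewrite imset_id. Qed.

Lemma card_liftS S : #|liftS S| = #|S|.
Proof. by rewrite card_imset // => a b [] . Qed.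

Lemma minA (D : {set 'I_n * H}) : minimal_dominating eP D ->
  minimal_dominating eH (snd @: D) /\ #|snd @: D| = #|D|.
Proof.
move/minsetP=> [dD minD]; rewrite dom_prod in dD.
split; last first.
  apply: card_in_imset => x y xD yD exy; apply/eqP/negPn/negP => nxy.
  have sub : D :\ x \subset D by apply: subsetDl.
  have : dominating eP (D :\ x).
    rewrite dom_prod; suff -> : snd @: (D :\ x) = snd @: D by [].
    apply/eqP; rewrite eqEsubset imsetS //=; apply/subsetP => h /imsetP[u uD ->].
    apply/imsetP; case: (eqVneq u x) => [->|ne].
      by exists y; rewrite // !inE yD andbT eq_sym.
    by exists u; rewrite // !inE ne.
  move/minD/(_ sub)/setP/(_ x); by rewrite !inE eqxx xD.
apply/minsetP; split => // S dS sS.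
set D' := D :&: snd @^-1: S.
have eS : snd @: D' = S.
  apply/eqP; rewrite eqEsubset; apply/andP; split.
    by apply/subsetP=> h /imsetP[u]; rewrite !inE => /andP[_ uS] ->.
  apply/subsetP=> h hS; have /imsetP[u uD eh] := subsetP sS h hS.
  by apply/imsetP; exists u; rewrite // !inE uD -eh hS.
have dD' : dominating eP D' by rewrite dom_prod eS.
have eD := minD D' dD' (subsetIl _ _).
by rewrite -{1}eD eS.
Qed.

Lemma minB (S : {set H}) : minimal_dominating eH S -> minimal_dominating eP (liftS S).
Proof.
move/minsetP=> [dS minS]; apply/minsetP; split; first by rewrite dom_prod liftSK.
move=> D' dD' sD'; apply/eqP; rewrite eqEcard sD' card_liftS.
rewrite dom_prod in dD'.
have -> : S = snd @: D'.
  by apply/esym/minS => //; rewrite -[S]liftSK imsetS.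
exact: leq_imset_card.
Qed.

End S.

Arguments minB {n H eH} n0 {S} _. Arguments minA {n H eH} n0 {D} _. Arguments liftS {n H} n0 S. Arguments dom_prod {n H eH} n0 D. Arguments liftSK {n H} n0 S. Arguments card_liftS {n H} n0 S.
Theorem theorem4 (n : nat) (H : finType) (eH : rel H) :
  0 < n -> simple_graph eH ->
  (well_dominated (strong_prod (@complete_rel n) eH) <-> well_dominated eH).
Proof.
move=> n0 _; split.
  move=> WP S mS; have [dS _] := minsetP mS.
  have := WP _ (minB n0 mS); case/andP=> _ /forallP Hm.
  apply/andP; split => //; apply/forallP => S'; apply/implyP => dS'.
  have := implyP (Hm (liftS n0 S')); rewrite dom_prod ?liftSK // => /(_ dS').
  by rewrite !card_liftS.
move=> WH D mD; have [dD _] := minsetP mD.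
have [mS cS] := minA n0 mD.
have := WH _ mS; case/andP=> _ /forallP Hm.
apply/andP; split => //; apply/forallP => D'; apply/implyP => dD'.
rewrite -cS; apply: leq_trans (leq_imset_card snd D').
by apply: (implyP (Hm _)); rewrite -dom_prod.
Qed.
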